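(* There exists a function $f:\mathbb{N}^3\to\mathbb{N}$ such that the following holds for all integers $D,k\ge 1$ and $b\ge 0$. Let $T$ be a rooted tree of maximum degree at most $D$ satisfying $b(T)\le b$. If every root-leaf path in $T$ contains less than $k$ vertices with at least two children, then $T$ has at most $f(D,b,k)$ leaves.
   Context: For a rooted tree $T$, $b(T)$ denotes the maximum depth of a rooted complete binary tree which appears in $T$ as a rooted minor, where the depth of a rooted tree is the maximum number of edges of a root-leaf path. *)

(* Defs.v *)
From Stdlib Require Import List Permutation Relation_Operators.
From mathcomp Require Import all_boot.
Set Implicit Arguments. Unset Strict Implicit. Unset Printing Implicit Defensive.

(* Finite rooted trees: a node with its (finite) list of child subtrees.
   The order of children is irrelevant (rooted minors allow permutation). *)
Inductive rtree : Type := Node of seq rtree.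

Definition children (t : rtree) : seq rtree := let: Node cs := t in cs.

(* Maximum (graph) degree at most D: the root has degree = #children,
   every other vertex has degree = #children + 1 (the edge to its parent). *)
Fixpoint deg_ok (D : nat) (isroot : bool) (t : rtree) : bool :=
  let: Node cs := t in
  (size cs + (if isroot then 0 else 1) <= D) && all (deg_ok D false) cs.

Definition max_degree_le (D : nat) (t : rtree) : bool := deg_ok D true t.

Fixpoint nleaves (t : rtree) : nat :=
  let: Node cs := t in
  if cs is [::] then 1 else sumn (map nleaves cs).

(* All root-leaf paths, each listed as the sequence of subtrees rooted at
   the vertices of the path (from the root down to a leaf). *)
Fixpoint rpaths (t : rtree) : seq (seq rtree) :=
  let: Node cs := t in
  if cs is [::] then [:: [:: t]]
  else flatten (map (fun c => map (cons t) (rpaths c)) cs).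

Definition branching (t : rtree) : bool := 2 <= size (children t).

Inductive rstep : rtree -> rtree -> Prop :=
| rs_del cs1 c cs2 :
    rstep (Node (cs1 ++ c :: cs2)) (Node (cs1 ++ cs2))
| rs_contr cs1 ds cs2 :
    rstep (Node (cs1 ++ Node ds :: cs2)) (Node (cs1 ++ ds ++ cs2))
| rs_perm cs cs' : Permutation cs cs' -> rstep (Node cs) (Node cs')
| rs_in cs1 c c' cs2 : rstep c c' ->
    rstep (Node (cs1 ++ c :: cs2)) (Node (cs1 ++ c' :: cs2)).

Definition rminor (H T : rtree) : Prop := clos_refl_trans rtree rstep T H.

Fixpoint cbt (d : nat) : rtree :=
  if d is d'.+1 then Node [:: cbt d'; cbt d'] else Node [::].

Definition b_le (T : rtree) (b : nat) : Prop :=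
  forall d, rminor (cbt d) T -> d <= b.

(* Main.v *)
Require Import Defs.
From Stdlib Require Import List.
From mathcomp Require Import all_boot.
From mathcomp Require Import zify.

Fixpoint rtree_ind' (P : rtree -> Prop)
  (H : forall cs, (forall c, List.In c cs -> P c) -> P (Node cs)) (t : rtree) : P t :=
  match t with Node cs => H cs
    ((fix go (l : seq rtree) : forall c, List.In c l -> P c :=
      match l with
      | nil => fun c (i : List.In c nil) => False_ind _ i
      | x :: l' => fun c i => match i with
                     | or_introl e => eq_ind x P (@rtree_ind' P H x) c e
                     | or_intror i' => go l' c i' end
      end) cs) end.

Lemma in_cat_l (A : Type) (x : A) s1 s2 : List.In x s1 -> List.In x (s1 ++ s2)%SEQ.
Proof. elim: s1 => //= a s IH [->|h]; [by left| right; exact: IH]. Qed.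
Lemma in_cat_r (A : Type) (x : A) s1 s2 : List.In x s2 -> List.In x (s1 ++ s2)%SEQ.
Proof. elim: s1 => //= a s IH h; right; exact: IH. Qed.

Lemma in_map_cons (A : Type) (t : A) q s : List.In q s -> List.In (t :: q) (map (cons t) s).
Proof. elim: s => //= a s IH [->|h]; [by left| right; exact: IH]. Qed.

Lemma in_flat (t : rtree) c cs q : List.In c cs -> List.In q (rpaths c) ->
  List.In (t :: q) (flatten (map (fun c => map (cons t) (rpaths c)) cs)).
Proof.
elim: cs => //= a s IH [->|h] hq.
- apply: in_cat_l; exact: in_map_cons.
- apply: in_cat_r; exact: IH.
Qed.

Lemma in_rp c cs q : List.In c cs -> List.In q (rpaths c) ->
  List.In (Node cs :: q) (rpaths (Node cs)).
Proof. case: cs => [//|a s] h1 h2. exact: (@in_flat (Node (a :: s)) c (a :: s) q). Qed.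

Lemma all_in (A : Type) (P : pred A) x s : all P s -> List.In x s -> P x.
Proof. elim: s => //= a s IH /andP[Pa Ps] [<-|h] //; exact: IH. Qed.

Lemma rpaths_ne t : exists p, List.In p (rpaths t).
Proof.
elim/rtree_ind': t => [[|c cs]] IH /=.
- by exists [:: Node [::]]; left.
- have [q hq] := IH c (or_introl erefl).
  exists (Node (c :: cs) :: q).
  apply: (@in_flat (Node (c :: cs)) c (c :: cs) q) => //; by left.
Qed.

Lemma sumn_le (M : nat) cs : (forall c, List.In c cs -> nleaves c <= M) ->
  sumn (map nleaves cs) <= size cs * M.
Proof.
elim: cs => //= a s IH h.
have h1 := h a (or_introl erefl).
have h2 : sumn (map nleaves s) <= size s * M by apply: IH => c hc; apply: h; right.
rewrite mulSn; exact: leq_add.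
Qed.

Lemma key D t : 1 <= D -> forall r k, deg_ok D r t ->
  (forall p, List.In p (rpaths t) -> count branching p <= k) -> nleaves t <= D ^ k.
Proof.
move=> D1; elim/rtree_ind': t => cs IH r k /= /andP[hs ha] hp.
case E: cs => [|c1 [|c2 cs']].
- by rewrite expn_gt0 D1.
- subst cs. rewrite /= addn0. apply: (IH c1 (or_introl erefl) false) => //.
  + by move: ha => /= /andP[].
  + move=> p hin. have := hp (Node [:: c1] :: p).
    rewrite /= /branching /=. apply. rewrite cats0. exact: in_map_cons.
- rewrite -E.
  have [q hq] := rpaths_ne c1.
  have hk : 1 <= k.
    have hc1 : List.In c1 cs by rewrite E; left.
    have := hp _ (@in_rp c1 cs q hc1 hq). rewrite /= {1}/branching /= E /=. lia.
  have hb : forall c, List.In c cs -> nleaves c <= D ^ k.-1.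
    move=> c hc. apply: (IH c hc false).
    + exact: (@all_in _ (deg_ok D false) c cs ha hc).
    + move=> p hin. have := hp _ (@in_rp c cs p hc hin).
      rewrite /= {1}/branching /= E /=. lia.
  have hs' : size cs <= D by move: hs; case: (r) => /=; lia.
  have := @sumn_le _ cs hb.
  have -> : sumn [seq nleaves i | i <- cs] = nleaves (Node cs) by rewrite /= E.
  move=> h. apply: (leq_trans h). rewrite -(prednK hk) expnS.
  exact: leq_mul.
Qed.

Theorem lemma15 :
  exists f : nat -> nat -> nat -> nat,
    forall (D k b : nat), 1 <= D -> 1 <= k ->
    forall T : rtree,
      max_degree_le D T ->
      b_le T b ->
      (forall p, List.In p (rpaths T) -> count branching p < k) ->
      nleaves T <= f D b k.
Proof.
exists (fun D _ k => D ^ k) => D k b D1 k1 T hd _ hp.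
apply: (@key D T D1 true) => // p hin; exact: ltnW (hp p hin).
Qed.
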